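(* In the setting described in the context, suppose the weighted design matrix $A_w\in\mathbb{R}^{T\times k}$ has full column rank. Then the least-squares estimator $\hat{\mathbf f}=(A_w^{\top}A_w)^{-1}A_w^{\top}\tilde{\mathbf s}$ satisfies $\mathbb{E}[\hat{\mathbf f}]=\mathbf f$, where the expectation is over the randomness of the users' reports, taken conditionally on the block counts $(n_0,\dots,n_{\ell-1})$ (all assumed $\ge 1$).
   Context: Domain $[k]=\{0,\dots,k-1\}$, privacy parameter $\varepsilon>0$, pairwise-coprime integer moduli $m_0,\dots,m_{\ell-1}\ge 2$. For each $j$, $\omega_j$ is the nearest integer to $m_j/(e^{\varepsilon}+1)$, $p_j=\frac{\omega_j e^{\varepsilon}}{\omega_j e^{\varepsilon}+m_j-\omega_j}$, and $q_j=\frac{\omega_j e^{\varepsilon}(\omega_j-1)+(m_j-\omega_j)\omega_j}{(m_j-1)(\omega_j e^{\varepsilon}+m_j-\omega_j)}$. There are $n$ users with values $x_1,\dots,x_n\in[k]$, and $\mathbf f\in\mathbb{R}^k$ with $f_v=\#\{i:x_i=v\}/n$. Each user independently runs the following mechanism on its value $x$: draw $J$ uniform on $\{0,\dots,\ell-1\}$; set $r=x\bmod m_J$; with probability $p_J$ report $Z=\{r\}\cup S$ with $S$ a uniformly random $(\omega_J-1)$-subset of $\{0,\dots,m_J-1\}\setminus\{r\}$, otherwise report $Z$ a uniformly random $\omega_J$-subset of $\{0,\dots,m_J-1\}\setminus\{r\}$; the report is $(J,Z)$. Server: $n_j$ is the number of reports with $J=j$; $c_j\in\mathbb{R}^{m_j}$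 with $c_j[a]$ the number of reports with $J=j$ and $a\in Z$; $\bar y_j=c_j/n_j$; $\hat s_j=(\bar y_j-q_j\mathbf 1)/(p_j-q_j)$; $\mathbf s\in\mathbb{R}^T$ stacks $\hat s_0,\dots,\hat s_{\ell-1}$, with $T=\sum_j m_j$. Let $\pi_j=q_j+(p_j-q_j)/m_j$ and $w_j=\frac{(p_j-q_j)^2 n_j}{\pi_j(1-\pi_j)}$; let $W^{1/2}$ be the $T\times T$ diagonal matrix whose entries are $\sqrt{w_0}$ repeated $m_0$ times, ..., $\sqrt{w_{\ell-1}}$ repeated $m_{\ell-1}$ times. For each $j$, $A_j\in\{0,1\}^{m_j\times k}$ has $A_j[r,x]=1$ iff $x\bmod m_j=r$; $A\in\{0,1\}^{T\times k}$ stacks $A_0,\dots,A_{\ell-1}$ vertically; $A_w=W^{1/2}A$ and $\tilde{\mathbf s}=W^{1/2}\mathbf s$. *)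

(* Defs.v *)
From HB Require Import structures.
From mathcomp Require Import all_boot all_order all_algebra.
From mathcomp Require Import all_classical all_reals all_analysis.
Set Implicit Arguments.
Unset Strict Implicit.
Unset Printing Implicit Defensive.
Import Order.TTheory GRing.Theory Num.Theory.
Local Open Scope ring_scope.

(* omega_j = nearest integer to m/(e^eps+1), convention: floor(x + 1/2). *)
Definition omega_of (R : realType) (eps : R) (m : nat) : nat :=
  `|Num.floor (m%:R / (expR eps + 1) + 2^-1)|%N.

Definition p_of (R : realType) (eps : R) (m : nat) : R :=
  let w : R := (omega_of eps m)%:R in
  w * expR eps / (w * expR eps + m%:R - w).

Definition q_of (R : realType) (eps : R) (m : nat) : R :=
  let w : R := (omega_of eps m)%:R in
  (w * expR eps * (w - 1) + (m%:R - w) * w) /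
  ((m%:R - 1) * (w * expR eps + m%:R - w)).

Definition memr (m : nat) (Z : {set 'I_m}) (r : nat) : bool :=
  [exists a in Z, nat_of_ord a == r].

(* probability mass that the randomizer, with modulus m and true residue r,
   outputs the set Z: with prob. p, {r} ∪ uniform (omega-1)-subset of [m]\{r};
   otherwise a uniform omega-subset of [m]\{r}. *)
Definition mech (R : realType) (eps : R) (m r : nat) (Z : {set 'I_m}) : R :=
  let w := omega_of eps m in
  let p := p_of eps m in
  if #|Z| == w then
    (if memr Z r then p / ('C(m.-1, w.-1))%:R
     else (1 - p) / ('C(m.-1, w))%:R)
  else 0.

Notation report m := {j : 'I_ _ & {set 'I_(m j)}}.

Definition prob (R : realType) (eps : R) (l n : nat) (m : 'I_l -> nat)
  (x : 'I_n -> nat) (o : {ffun 'I_n -> report m}) : R :=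
  \prod_(i < n)
     ((l%:R)^-1 * mech eps (x i %% m (tag (o i))) (tagged (o i))).

Definition cnt (l n : nat) (m : 'I_l -> nat) (o : {ffun 'I_n -> report m})
  (j : 'I_l) : nat := #|[set i | tag (o i) == j]|.

Definition cnt_a (l n : nat) (m : 'I_l -> nat) (o : {ffun 'I_n -> report m})
  (j : 'I_l) (a : nat) : nat :=
  #|[set i | (tag (o i) == j) && memr (tagged (o i)) a]|.

Definition Ablock (R : realType) (mj k : nat) : 'M[R]_(mj, k) :=
  \matrix_(r < mj, v < k) ((v %% mj)%N == r :> nat)%:R.

Definition Amat (R : realType) (l k : nat) (m : 'I_l -> nat)
  : 'M[R]_(\sum_(j < l) m j, k) := \mxcol_(j < l) Ablock R (m j) k.

Definition pi_of (R : realType) (eps : R) (m : nat) : R :=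
  q_of eps m + (p_of eps m - q_of eps m) / m%:R.

Definition weight (R : realType) (eps : R) (m nj : nat) : R :=
  (p_of eps m - q_of eps m) ^+ 2 * nj%:R / (pi_of eps m * (1 - pi_of eps m)).

Definition Wsqrt (R : realType) (eps : R) (l : nat) (m : 'I_l -> nat)
  (nn : 'I_l -> nat) : 'M[R]_(\sum_(j < l) m j) :=
  \mxdiag_(j < l) ((Num.sqrt (weight eps (m j) (nn j)))%:M : 'M[R]_(m j)).

Definition Aw (R : realType) (eps : R) (l k : nat) (m : 'I_l -> nat)
  (nn : 'I_l -> nat) : 'M[R]_(\sum_(j < l) m j, k) :=
  Wsqrt eps m nn *m Amat R k m.

Definition shat (R : realType) (eps : R) (l n : nat) (m : 'I_l -> nat)
  (o : {ffun 'I_n -> report m}) (j : 'I_l) : 'cV[R]_(m j) :=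
  \col_(a < m j)
    (((cnt_a o j a)%:R / (cnt o j)%:R - q_of eps (m j)) /
     (p_of eps (m j) - q_of eps (m j))).

Definition svec (R : realType) (eps : R) (l n : nat) (m : 'I_l -> nat)
  (o : {ffun 'I_n -> report m}) : 'cV[R]_(\sum_(j < l) m j) :=
  \mxcol_(j < l) shat eps o j.

Definition fhat (R : realType) (eps : R) (l n k : nat) (m : 'I_l -> nat)
  (o : {ffun 'I_n -> report m}) : 'cV[R]_k :=
  let A := Aw eps k m (cnt o) in
  invmx (A^T *m A) *m A^T *m (Wsqrt eps m (cnt o) *m svec eps o).

Definition fvec (R : realType) (n k : nat) (x : 'I_n -> 'I_k) : 'cV[R]_k :=
  \col_(v < k) (#|[set i | x i == v]|%:R / n%:R).

Definition counts_eq (l n : nat) (m : 'I_l -> nat) (nn : 'I_l -> nat)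
  (o : {ffun 'I_n -> report m}) : bool := [forall j, cnt o j == nn j].

(* E[ fhat | (n_0,...,n_{l-1}) = nn ] *)
Definition cond_exp_fhat (R : realType) (eps : R) (l n k : nat)
  (m : 'I_l -> nat) (x : 'I_n -> 'I_k) (nn : 'I_l -> nat) : 'cV[R]_k :=
  (\sum_(o : {ffun 'I_n -> report m} | counts_eq nn o)
      prob eps (fun i => nat_of_ord (x i)) o)^-1 *:
  (\sum_(o : {ffun 'I_n -> report m} | counts_eq nn o)
      prob eps (fun i => nat_of_ord (x i)) o *: @fhat R eps l n k m o).

(* Main.v *)
Require Import Defs.
From HB Require Import structures.
From mathcomp Require Import all_boot all_order all_algebra.
From mathcomp Require Import all_classical all_reals all_analysis.
Import Order.TTheory GRing.Theory Num.Theory.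
From mathcomp Require Import lra ring perm.
Set Implicit Arguments. Unset Strict Implicit.
Local Open Scope ring_scope.
Lemma omega_lt (R : realType) (eps : R) (m : nat) :
  0 < eps -> (1 <= m)%N -> (omega_of eps m < m)%N.
Proof.
move=> he hm; rewrite /omega_of.
have ey : 1 < expR eps by rewrite expR_gt1.
have e1 : 0 < expR eps + 1 by lra.
have h2 : (1 <= m%:R :> R) by rewrite ler1n.
have y0 : 0 <= m%:R / (expR eps + 1) + 2^-1 :> R.
  by rewrite addr_ge0 // divr_ge0 // ?ler0n // ltW.
have h1 : m%:R / (expR eps + 1) < m%:R / 2 :> R.
  rewrite ltr_pM2l ?ltr0n // ltf_pV2 ?posrE ?ltr0n //; lra.
have h3 : m%:R / 2 + 2^-1 <= m%:R :> R.
  have -> : m%:R / 2 + 2^-1 = m%:R - (m%:R - 1) / 2 :> R by field.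
  have : 0 <= (m%:R - 1) / 2 :> R by rewrite divr_ge0 //; lra.
  lra.
have f0 : (0 <= Num.floor (m%:R / (expR eps + 1) + 2^-1 : R))%R by rewrite floor_ge0.
have : (Num.floor (m%:R / (expR eps + 1) + 2^-1 : R) < m%:Z)%R.
  rewrite floor_lt_int pmulrn; lra.
by rewrite -[Num.floor _]gez0_abs // ltz_nat.
Qed.
Lemma card_fix (T : finType) (F G : {set T}) (w : nat) :
  [disjoint F & G] ->
  #|[set Z : {set T} | (F \subset Z) && [disjoint Z & G] && (#|Z| == w)]| =
  if (#|F| <= w)%N then 'C(#|~: (F :|: G)|, w - #|F|) else 0%N.
Proof.
move=> dFG; case: leqP => hw; last first.
  apply: eq_card0 => Z; rewrite inE; apply/negP => /andP[/andP[sFZ _] /eqP hZ].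
  by move: (subset_leq_card sFZ); rewrite hZ leqNgt hw.
rewrite -cards_draws.
set D := [set A : {set T} | A \subset ~: (F :|: G) & #|A| == (w - #|F|)%N].
have injD : {in D &, injective (fun A => A :|: F)}.
  move=> A B; rewrite /D !inE => /andP[sA _] /andP[sB _] eAB.
  apply/setP => u; move/setP: eAB => /(_ u); rewrite !inE.
  case uF: (u \in F) => //=; rewrite ?orbF // => _.
  move/fintype.subsetP: sA => /(_ u); move/fintype.subsetP: sB => /(_ u).
  by move=> hB hA; apply/idP/idP => [/hA|/hB]; rewrite !inE uF.
rewrite -(card_in_imset injD); apply: eq_card => Z; rewrite inE.
apply/idP/imsetP.
- move=> /andP[/andP[sFZ dZG] /eqP hZ]; exists (Z :\: F); last first.
    apply/setP => u; rewrite !inE; case uF: (u \in F) => /=; rewrite ?orbF ?orbT //.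
    by rewrite (fintype.subsetP sFZ).
  rewrite /D inE; apply/andP; split.
    apply/fintype.subsetP => u; rewrite !inE => /andP[uF uZ]; rewrite (negPf uF) /=.
    by apply/negP => uG; move: (disjointFr dZG uZ); rewrite uG.
  by rewrite cardsDS // hZ.
- move=> [A]; rewrite /D inE => /andP[sA /eqP hA] ->.
  have dAF : [disjoint A & F].
    apply/pred0P => u /=; apply/negP => /andP[uA uF].
    by move/fintype.subsetP: sA => /(_ u uA); rewrite !inE uF.
  rewrite finset.subsetUr /=; apply/andP; split.
    apply/pred0P => u /=; rewrite !inE; apply/negP => /andP[/orP[uA|uF] uG].
      by move/fintype.subsetP: sA => /(_ u uA); rewrite !inE uG orbT.
    by move: (disjointFr dFG uF); rewrite uG.
  rewrite cardsU hA.
  have -> : A :&: F = finset.set0.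
    apply/setP => u; rewrite !inE; case uA: (u \in A) => //=.
    by rewrite (disjointFr dAF uA).
  by rewrite cards0 subn0 subnK.
Qed.
Lemma sum_ind (R : realType) (T : finType) (b : pred T) :
  \sum_(t : T) (b t)%:R = #|[set t | b t]|%:R :> R.
Proof.
rewrite -sumr_const [RHS]big_mkcond /=; apply: eq_bigr => t _; rewrite inE.
by case: (b t).
Qed.

Lemma memrE (m : nat) (Z : {set 'I_m}) (r : nat) (hr : (r < m)%N) :
  memr Z r = (Ordinal hr \in Z).
Proof.
rewrite /memr; apply/existsP/idP => [[a /andP[aZ /eqP ar]] | h].
  by have -> : Ordinal hr = a by apply: val_inj.
by exists (Ordinal hr); rewrite h eqxx.
Qed.

Lemma mech_dec (R : realType) (eps : R) (m r : nat) (hr : (r < m)%N)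
  (g : pred {set 'I_m}) :
  \sum_(Z : {set 'I_m}) mech eps r Z * (g Z)%:R =
  p_of eps m / ('C(m.-1, (omega_of eps m).-1))%:R *
    #|[set Z : {set 'I_m} | (#|Z| == omega_of eps m) && (Ordinal hr \in Z) && g Z]|%:R +
  (1 - p_of eps m) / ('C(m.-1, omega_of eps m))%:R *
    #|[set Z : {set 'I_m} | (#|Z| == omega_of eps m) && (Ordinal hr \notin Z) && g Z]|%:R.
Proof.
rewrite -!sum_ind !mulr_sumr -big_split /=; apply: eq_bigr => Z _.
rewrite /mech (memrE Z hr).
case: (#|Z| == _); case: (Ordinal hr \in Z); case: (g Z) => /=;
  by rewrite ?mulr1 ?mulr0 ?addr0 ?add0r.
Qed.
Lemma disj0 (T : finType) (Z : {set T}) : [disjoint Z & (finset.set0 : {set T})].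
Proof. by apply/pred0P => u /=; rewrite inE andbF. Qed.

Lemma disj1 (T : finType) (Z : {set T}) (a : T) : [disjoint Z & [set a]] = (a \notin Z).
Proof.
apply/pred0P/idP => [h|h u] /=; last first.
  by rewrite inE; apply/negP => /andP[uZ /eqP ua]; move: h; rewrite -ua uZ.
by apply/negP => aZ; move: (h a); rewrite /= inE eqxx aZ.
Qed.

Lemma cardC' (T : finType) (A : {set T}) : #|~: A| = (#|T| - #|A|)%N.
Proof. by rewrite -(cardsC A) addKn. Qed.

Lemma cnt_in (m w : nat) (ro : 'I_m) :
  #|[set Z : {set 'I_m} | (#|Z| == w) && (ro \in Z)]| =
  if (1 <= w)%N then 'C(m.-1, w.-1) else 0%N.
Proof.
have := card_fix w (disj0 [set ro]).
rewrite cards1 cardC' finset.setU0 cards1 card_ord !subn1 => <-.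
apply: eq_card => Z; rewrite !inE finset.sub1set disj0 andbT andbC.
by [].
Qed.

Lemma cnt_out (m w : nat) (ro : 'I_m) :
  #|[set Z : {set 'I_m} | (#|Z| == w) && (ro \notin Z)]| = 'C(m.-1, w).
Proof.
have dd : [disjoint (finset.set0 : {set 'I_m}) & [set ro]].
  by rewrite disjoint_sym disj0.
have := card_fix w dd.
rewrite cards0 cardC' finset.set0U cards1 card_ord !subn1 subn0 /= => <-.
apply: eq_card => Z; rewrite !inE finset.sub0set disj1 /= andbC.
by [].
Qed.

Lemma cnt_in2 (m w : nat) (ro ao : 'I_m) : ro != ao ->
  #|[set Z : {set 'I_m} | (#|Z| == w) && (ro \in Z) && (ao \in Z)]| =
  if (2 <= w)%N then 'C(m.-2, w.-2) else 0%N.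
Proof.
move=> ne.
have := card_fix w (disj0 [set ro; ao]).
rewrite cards2 ne cardC' finset.setU0 cards2 ne card_ord !subn2 => <-.
apply: eq_card => Z; rewrite !inE finset.subUset !finset.sub1set disj0 andbT.
by case: (#|Z| == w); case: (ro \in Z); case: (ao \in Z).
Qed.

Lemma cnt_inout (m w : nat) (ro ao : 'I_m) : ro != ao ->
  #|[set Z : {set 'I_m} | (#|Z| == w) && (ro \notin Z) && (ao \in Z)]| =
  if (1 <= w)%N then 'C(m.-2, w.-1) else 0%N.
Proof.
move=> ne.
have dd : [disjoint [set ao] & [set ro]].
  by rewrite disj1 inE.
have := card_fix w dd.
rewrite cards1 cardC' cardsU !cards1 card_ord subn1.
have -> : [set ao] :&: [set ro] = finset.set0.
  by apply/setP => u; rewrite !inE; apply/negP => /andP[/eqP -> /eqP e]; move: ne; rewrite e eqxx.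
rewrite cards0 subn0 (_ : (m - (1 + 1))%N = m.-2); last by rewrite -subn2.
move=> <-.
apply: eq_card => Z; rewrite !inE finset.sub1set disj1.
by case: (#|Z| == w); case: (ro \in Z); case: (ao \in Z).
Qed.
Lemma mech_sum (R : realType) (eps : R) (m r : nat) :
  0 < eps -> (2 <= m)%N -> forall hr : (r < m)%N,
  \sum_(Z : {set 'I_m}) mech eps r Z = 1.
Proof.
move=> he hm hr.
transitivity (\sum_(Z : {set 'I_m}) mech eps r Z * (xpredT Z)%:R).
  by apply: eq_bigr => Z _; rewrite mulr1.
rewrite (mech_dec eps hr).
have e1 : #|[set Z : {set 'I_m} | (#|Z| == omega_of eps m) && (Ordinal hr \in Z) && xpredT Z]|
   = #|[set Z : {set 'I_m} | (#|Z| == omega_of eps m) && (Ordinal hr \in Z)]|.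
  by apply: eq_card => Z; rewrite !inE andbT.
have e2 : #|[set Z : {set 'I_m} | (#|Z| == omega_of eps m) && (Ordinal hr \notin Z) && xpredT Z]|
   = #|[set Z : {set 'I_m} | (#|Z| == omega_of eps m) && (Ordinal hr \notin Z)]|.
  by apply: eq_card => Z; rewrite !inE andbT.
rewrite e1 e2 cnt_in cnt_out.
have := omega_lt he (ltnW hm).
rewrite /p_of; move: (omega_of eps m) => w hw.
have c0 : ('C(m.-1, w))%:R != 0 :> R.
  by rewrite pnatr_eq0 -lt0n bin_gt0 -ltnS prednK // ltnW.
case: w hw c0 => [|w] hw c0 /=.
  by rewrite !mul0r bin0 subr0 div1r mulVf // add0r.
have c1 : ('C(m.-1, w))%:R != 0 :> R.
  by rewrite pnatr_eq0 -lt0n bin_gt0 -ltnS prednK // ltnW // ltnW.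
by rewrite -!mulrA !mulVf // !mulr1 addrC subrK.
Qed.
Lemma mech_mem (R : realType) (eps : R) (m r a : nat) :
  0 < eps -> (2 <= m)%N -> forall hr : (r < m)%N, (a < m)%N ->
  \sum_(Z : {set 'I_m}) mech eps r Z * (memr Z a)%:R =
  q_of eps m + (p_of eps m - q_of eps m) * (r == a)%:R.
Proof.
move=> he hm hr ha.
rewrite (mech_dec eps hr).
have hw := omega_lt he (ltnW hm).
have m1 : (m.-1)%:R = m%:R - 1 :> R by rewrite -subn1 natrB // ltnW.
have m1n0 : m%:R - 1 != 0 :> R.
  by rewrite -m1 pnatr_eq0 -lt0n -ltnS prednK // ltnW.
case: (eqVneq r a) => [era | nra].
  subst a.
  have e1 : #|[set Z : {set 'I_m} | (#|Z| == omega_of eps m) && (Ordinal hr \in Z) && memr Z r]|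
     = #|[set Z : {set 'I_m} | (#|Z| == omega_of eps m) && (Ordinal hr \in Z)]|.
    by apply: eq_card => Z; rewrite !inE (memrE Z hr); case: (_ \in _); rewrite ?andbT ?andbF.
  have e2 : #|[set Z : {set 'I_m} | (#|Z| == omega_of eps m) && (Ordinal hr \notin Z) && memr Z r]| = 0%N.
    by apply: eq_card0 => Z; rewrite !inE (memrE Z hr); case: (_ \in _); rewrite ?andbF.
  rewrite e1 e2 cnt_in mulr0 addr0 mulr1 addrC subrK.
  rewrite /p_of; move: (omega_of eps m) hw => w hw.
  case: w hw => [|w] hw /=; first by rewrite !mul0r.
  have c1 : ('C(m.-1, w))%:R != 0 :> R.
    by rewrite pnatr_eq0 -lt0n bin_gt0 -ltnS prednK // ltnW.
  by rewrite -mulrA mulVf // mulr1.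
have ne : Ordinal hr != Ordinal ha by apply/eqP => -[] /eqP; rewrite (negPf nra).
have e1 : #|[set Z : {set 'I_m} | (#|Z| == omega_of eps m) && (Ordinal hr \in Z) && memr Z a]|
   = #|[set Z : {set 'I_m} | (#|Z| == omega_of eps m) && (Ordinal hr \in Z) && (Ordinal ha \in Z)]|.
  by apply: eq_card => Z; rewrite !inE (memrE Z ha).
have e2 : #|[set Z : {set 'I_m} | (#|Z| == omega_of eps m) && (Ordinal hr \notin Z) && memr Z a]|
   = #|[set Z : {set 'I_m} | (#|Z| == omega_of eps m) && (Ordinal hr \notin Z) && (Ordinal ha \in Z)]|.
  by apply: eq_card => Z; rewrite !inE (memrE Z ha).
rewrite e1 e2 (cnt_in2 _ ne) (cnt_inout _ ne) mulr0 addr0.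
rewrite /p_of /q_of; move: (omega_of eps m) hw => w hw.
have he1 : 0 < expR eps by rewrite expR_gt0.
case: w hw => [|w] hw /=.
  by rewrite !mulr0n !mulr0 !mul0r !addr0 mul0r.
have c0 : ('C(m.-1, w.+1))%:R != 0 :> R.
  by rewrite pnatr_eq0 -lt0n bin_gt0 -ltnS prednK // ltnW.
have c1 : ('C(m.-1, w))%:R != 0 :> R.
  by rewrite pnatr_eq0 -lt0n bin_gt0 -ltnS prednK // ltnW // ltnW.
have hY : ('C(m.-2, w))%:R = (w.+1)%:R * ('C(m.-1, w.+1))%:R / (m%:R - 1) :> R.
  rewrite -m1 -natrM -mul_bin_diag natrM [X in X / _]mulrC mulfK //.
  by rewrite m1.
have hX : (if (1 < w.+1)%N then 'C(m.-2, w.+1.-2) else 0%N)%:R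
     = (w%:R) * ('C(m.-1, w))%:R / (m%:R - 1) :> R.
  case: w hw c0 c1 hY => [|w] hw c0 c1 hY /=; first by rewrite !mul0r.
  rewrite -m1 -natrM -mul_bin_diag natrM [X in X / _]mulrC mulfK //.
  by rewrite m1.
rewrite hX hY.
have D0 : (w.+1)%:R * expR eps + m%:R - (w.+1)%:R != 0 :> R.
  have : ((w.+1)%:R < m%:R :> R) by rewrite ltr_nat.
  have : 0 < (w.+1)%:R * expR eps :> R by rewrite mulr_gt0 // ltr0n.
  move=> h1 h2; apply/eqP => h3; lra.
rewrite -[(w.+1)%:R]natr1; rewrite -[(w.+1)%:R]natr1 in D0.
field.
by rewrite D0 m1n0 c1 c0.
Qed.
Section B.
Variables (R : realType) (l n : nat) (m : 'I_l -> nat).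
Notation rep := {j : 'I_l & {set 'I_(m j)}}.

Lemma per_user (t : 'I_l) (F : forall j, {set 'I_(m j)} -> R) :
  \sum_(r : rep) (tag r == t)%:R * F (tag r) (tagged r) =
  \sum_(Z : {set 'I_(m t)}) F t Z.
Proof.
pose G := fun j (Z : {set 'I_(m j)}) => (j == t)%:R * F j Z.
have := @sig_big_dep _ 0 +%R 'I_l (fun j => {set 'I_(m j)}) xpredT (fun _ _ => true) G.
rewrite /= => <-.
rewrite (bigD1 t) //= [X in _ + X]big1 ?addr0; last first.
  by move=> j /negPf jt; apply: big1 => Z _; rewrite /G jt mul0r.
by apply: eq_bigr => Z _; rewrite /G eqxx mul1r.
Qed.

Definition tc (nn : 'I_l -> nat) (t : {ffun 'I_n -> 'I_l}) : bool :=
  [forall j, #|[set i | t i == j]| == nn j].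

Lemma ind_counts (nn : 'I_l -> nat) (o : {ffun 'I_n -> rep}) :
  (counts_eq nn o)%:R =
  \sum_(t | tc nn t) \prod_(i < n) (tag (o i) == t i)%:R :> R.
Proof.
pose tt := [ffun i => tag (o i)].
rewrite (eq_bigr (fun t => (t == tt)%:R)); last first.
  move=> t _; case: eqVneq => [->|ne].
    by apply: big1 => i _; rewrite ffunE eqxx.
  have : ~~ [forall i, t i == tt i].
    apply/negP => /forallP h; move: ne; suff -> : t = tt by rewrite eqxx.
    by apply/ffunP => i; apply/eqP.
  move/forallPn => [i hi]; rewrite (bigD1 i) //= -(ffunE (fun i => tag (o i))) -/tt.
  by rewrite eq_sym (negPf hi) mul0r.
rewrite big_mkcond (bigD1 tt) //= [X in _ + X]big1 ?addr0; last first.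
  by move=> t /negPf ->; case: (tc nn t).
rewrite eqxx; have -> : counts_eq nn o = tc nn tt.
  rewrite /counts_eq /tc; apply: eq_forallb => j.
  by rewrite /cnt; congr (_ == _); apply: eq_card => i; rewrite !inE ffunE.
by case: (tc nn tt).
Qed.

Lemma sum_counts (nn : 'I_l -> nat) (H : 'I_n -> rep -> R) :
  \sum_(o : {ffun 'I_n -> rep} | counts_eq nn o) \prod_(i < n) H i (o i) =
  \sum_(t | tc nn t) \prod_(i < n) \sum_(r : rep) (tag r == t i)%:R * H i r.
Proof.
rewrite big_mkcond /=.
rewrite (eq_bigr (fun o => (counts_eq nn o)%:R * \prod_(i < n) H i (o i))); last first.
  by move=> o _; case: counts_eq; rewrite ?mul1r ?mul0r.
under eq_bigr do rewrite ind_counts mulr_suml.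
rewrite exchange_big /=; apply: eq_bigr => t _.
rewrite bigA_distr_bigA; apply: eq_bigr => o _.
by rewrite -big_split.
Qed.

End B.
Section Sym.
Variables (l n : nat) (nn : 'I_l -> nat).

Definition cT (i : 'I_n) (j : 'I_l) :=
  #|[set t : {ffun 'I_n -> 'I_l} | tc nn t && (t i == j)]|.

Lemma tc_perm (s : {perm 'I_n}) (t : {ffun 'I_n -> 'I_l}) :
  tc nn [ffun u => t (s u)] = tc nn t.
Proof.
rewrite /tc; apply: eq_forallb => j.
have -> : [set i | [ffun u => t (s u)] i == j] = s @^-1: [set i | t i == j].
  by apply/setP => u; rewrite !inE ffunE.
by rewrite card_preimset //; exact: perm_inj.
Qed.

Lemma cT_const (i i' : 'I_n) j : cT i j = cT i' j.
Proof.
pose f := fun t : {ffun 'I_n -> 'I_l} => [ffun u => t (tperm i i' u)].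
have finj : injective f.
  have fK : involutive f by move=> t; apply/ffunP => u; rewrite !ffunE tpermK.
  exact: inv_inj.
rewrite /cT -[RHS](card_preimset _ finj).
have -> : f @^-1: [set t : {ffun 'I_n -> 'I_l} | tc nn t && (t i' == j)] =
   [set t : {ffun 'I_n -> 'I_l} | tc nn t && (t i == j)].
  by apply/setP => t; rewrite !inE tc_perm ffunE tpermR.
by [].
Qed.

Lemma cT_sum (i0 : 'I_n) j : (n * cT i0 j = #|[set t : {ffun 'I_n -> 'I_l} | tc nn t]| * nn j)%N.
Proof.
have -> : (n * cT i0 j = \sum_(i < n) cT i j)%N.
  by rewrite (eq_bigr (fun _ => cT i0 j)) ?sum_nat_const ?card_ord // => i _; apply: cT_const.
have e : forall i, cT i j = \sum_(t | tc nn t) ((t i == j) : nat).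
  move=> i; rewrite /cT -sum1_card big_mkcond /= [RHS]big_mkcond /=.
  by apply: eq_bigr => t _; rewrite inE; case: (tc nn t); case: (t i == j).
under eq_bigr do rewrite e.
rewrite exchange_big /= -sum_nat_const.
apply: eq_big => [t|t]; first by rewrite inE.
move=> /forallP /(_ j) /eqP <-.
by rewrite -sum1_card [RHS]big_mkcond /=; apply: eq_bigr => i _; rewrite inE; case: (t i == j).
Qed.

End Sym.
Lemma tc_exists (l n : nat) (nn : 'I_l -> nat) (j0 : 'I_l) :
  (\sum_(j < l) nn j)%N = n -> exists t : {ffun 'I_n -> 'I_l}, tc nn t.
Proof.
move=> hsum.
pose s := flatten [seq nseq (nn j) j | j <- enum 'I_l].
have cs : forall j, count_mem j s = nn j.
  move=> j; rewrite count_flatten -map_comp.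
  rewrite (eq_map (_ : _ =1 fun j' => (j' == j) * nn j')%N); last first.
    by move=> jj /=; rewrite count_nseq.
  rewrite sumnE big_map big_enum /= (bigD1 j) //= eqxx mul1n big1 ?addn0 //.
  by move=> j' /negPf ->.
have ss : size s = n.
  rewrite size_flatten /shape -map_comp sumnE big_map big_enum /= -hsum.
  by apply: eq_bigr => j _; rewrite /= size_nseq.
exists [ffun i : 'I_n => nth j0 s i].
apply/forallP => j; apply/eqP; rewrite -cs.
rewrite -sum1_card.
transitivity (\sum_(0 <= i < n | nth j0 s i == j) 1)%N.
  rewrite big_mkord; apply: eq_bigl => i; by rewrite inE ffunE.
rewrite /index_iota subn0 sum1_count.
rewrite -{2}(mkseq_nth j0 s) ss /mkseq count_map.
by apply: eq_count => i.
Qed.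
Lemma prod_if1 (R : realType) (n : nat) (i0 : 'I_n) (c : R) :
  \prod_(i < n) (if i == i0 then c else 1) = c.
Proof. by rewrite (bigD1 i0) //= eqxx big1 ?mulr1 // => i /negPf ->. Qed.

Section C.
Variables (R : realType) (eps : R) (l n : nat) (m : 'I_l -> nat) (xx : 'I_n -> nat).
Hypothesis he : 0 < eps.
Hypothesis hm : forall j, (2 <= m j)%N.
Notation rep := {j : 'I_l & {set 'I_(m j)}}.
Let ll : R := (l%:R)^-1.
Let G i (r : rep) : R := ll * mech eps (xx i %% m (tag r)) (tagged r).

Lemma user_tot (t : 'I_l) i : \sum_(r : rep) (tag r == t)%:R * G i r = ll.
Proof.
rewrite /G (per_user t (fun jj Z => ll * mech eps (xx i %% m jj) Z)).
by rewrite -mulr_sumr mech_sum ?mulr1 // ltn_pmod // (leq_trans _ (hm t)).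
Qed.

Lemma user_mem (t j : 'I_l) i (a : nat) : (a < m j)%N ->
  \sum_(r : rep) (tag r == t)%:R * (G i r * ((tag r == j) && memr (tagged r) a)%:R) =
  ll * ((t == j)%:R * (q_of eps (m j) + (p_of eps (m j) - q_of eps (m j)) * ((xx i %% m j)%N == a)%:R)).
Proof.
move=> ha.
rewrite /G (per_user t (fun jj Z => ll * mech eps (xx i %% m jj) Z * ((jj == j) && memr Z a)%:R)).
case: (eqVneq t j) => [->|ne] /=.
  under eq_bigr do rewrite -mulrA.
  have hr : (xx i %% m j < m j)%N by rewrite ltn_pmod // (leq_trans _ (hm j)).
  by rewrite -mulr_sumr (mech_mem he (hm j) hr ha) mul1r.
by rewrite mul0r mulr0 big1 // => Z _; rewrite mulr0.
Qed.

Lemma sum_ind_cond (T : finType) (P b : pred T) :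
  \sum_(t | P t) (b t)%:R = #|[set t | P t && b t]|%:R :> R.
Proof.
rewrite -sum_ind big_mkcond /=; apply: eq_bigr => t _.
by case: (P t).
Qed.

Lemma prob_G (o : {ffun 'I_n -> rep}) : prob eps xx o = \prod_(i < n) G i (o i).
Proof. by []. Qed.

Lemma Zs_eq (nn : 'I_l -> nat) :
  \sum_(o : {ffun 'I_n -> rep} | counts_eq nn o) prob eps xx o =
  #|[set t : {ffun 'I_n -> 'I_l} | tc nn t]|%:R * ll ^+ n.
Proof.
rewrite (eq_bigr (fun o : {ffun 'I_n -> rep} => \prod_(i < n) G i (o i))) // (sum_counts nn G).
under eq_bigr do under eq_bigr do rewrite user_tot.
under eq_bigr do rewrite prodr_const card_ord.
transitivity (\sum_(t : {ffun 'I_n -> 'I_l} | tc nn t) (1 : R) * ll ^+ n); first by apply: eq_bigr => t _; rewrite mul1r.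
rewrite -mulr_suml; congr (_ * _).
rewrite (eq_bigr (fun t => (true : bool)%:R)) // sum_ind_cond.
by congr (_%:R); apply: eq_card => t; rewrite !inE andbT.
Qed.

Lemma Cs_eq (nn : 'I_l -> nat) (j : 'I_l) (a : nat) : (a < m j)%N ->
  \sum_(o : {ffun 'I_n -> rep} | counts_eq nn o) prob eps xx o * (cnt_a o j a)%:R =
  \sum_(i0 < n) ll ^+ n * (q_of eps (m j) + (p_of eps (m j) - q_of eps (m j)) * ((xx i0 %% m j)%N == a)%:R)
     * (cT nn i0 j)%:R.
Proof.
move=> ha.
have e1 : forall o : {ffun 'I_n -> rep}, (cnt_a o j a)%:R =
   \sum_(i0 < n) ((tag (o i0) == j) && memr (tagged (o i0)) a)%:R :> R.
  by move=> o; rewrite sum_ind.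
under eq_bigr do rewrite e1 mulr_sumr.
rewrite exchange_big /=; apply: eq_bigr => i0 _.
pose H := fun i (r : rep) => G i r * (if i == i0 then ((tag r == j) && memr (tagged r) a)%:R else 1).
rewrite (eq_bigr (fun o : {ffun 'I_n -> rep} => \prod_(i < n) H i (o i))); last first.
  move=> o _; rewrite /H big_split /= prob_G; congr (_ * _).
  by rewrite -(prod_if1 i0 (((tag (o i0) == j) && memr (tagged (o i0)) a)%:R)); apply: eq_bigr => i _; case: eqVneq => // ->.
rewrite (sum_counts nn H).
have e2 : forall t : {ffun 'I_n -> 'I_l}, forall i, 
   \sum_(r : rep) (tag r == t i)%:R * H i r =
   ll * (if i == i0 then (t i0 == j)%:R * (q_of eps (m j) + (p_of eps (m j) - q_of eps (m j)) * ((xx i0 %% m j)%N == a)%:R) else 1).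
  move=> t i; rewrite /H; case: eqVneq => [->|ne].
    exact: user_mem.
  by rewrite mulr1; under eq_bigr do rewrite mulr1; rewrite user_tot.
under eq_bigr do under eq_bigr do rewrite e2.
under eq_bigr do rewrite big_split /= prodr_const card_ord prod_if1.
rewrite -mulr_sumr -mulr_suml -mulrA; congr (_ * _).
rewrite mulrC; congr (_ * _).
by rewrite sum_ind_cond.
Qed.

End C.
Lemma AtA_unit (R : realType) (p k : nat) (A : 'M[R]_(p, k)) :
  \rank A = k -> A^T *m A \in unitmx.
Proof.
move=> hr; rewrite -row_free_unit -kermx_eq0; apply/eqP/row_matrixP => i.
rewrite row0; set v := row i _.
have hv : v *m (A^T *m A) = 0 by rewrite /v -row_mul mulmx_ker row0.
set u := v *m A^T.
have huu : u *m u^T = 0 by rewrite /u trmx_mul trmxK mulmxA -(mulmxA v) hv mul0mx.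
have u0 : u = 0.
  apply/rowP => t; rewrite [RHS]mxE.
  have := congr1 (fun M : 'M[R]_1 => M 0 0) huu; rewrite /= !mxE => hs.
  have pos : forall t', xpredT t' -> 0 <= u 0 t' * u^T t' 0.
    by move=> tt _; rewrite [u^T tt 0]mxE -expr2 sqr_ge0.
  have h0 := psumr_eq0P pos hs (i:=t) isT.
  rewrite [u^T t 0]mxE in h0; move/eqP: h0; rewrite mulf_eq0 orbb.
  by move/eqP; rewrite /u !mxE.
have hAv : A *m v^T = 0 by rewrite -(trmxK A) -trmx_mul -/u u0 trmx0.
have hf : row_full A by rewrite /row_full hr.
have : v^T = 0 by rewrite -[v^T]mul1mx -(mulVpmx hf) -mulmxA hAv mulmx0.
by move/(congr1 trmx); rewrite trmxK trmx0.
Qed.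

Lemma mxcolZ (R : realType) (l : nat) (p_ : 'I_l -> nat) (c : R) (B : forall i, 'M[R]_(p_ i, 1)) :
  c *: \mxcol_i B i = \mxcol_i (c *: B i).
Proof. by apply/matrixP => i j; rewrite !mxE. Qed.

Lemma count_mod (R : realType) (n k mj : nat) (x : 'I_n -> 'I_k) (a : nat) :
  \sum_(v < k) (((v %% mj)%N == a)%:R * #|[set i | x i == v]|%:R) =
  #|[set i | ((x i %% mj)%N == a)]|%:R :> R.
Proof.
under eq_bigr do rewrite -sum_ind mulr_sumr.
rewrite exchange_big -sum_ind; apply: eq_bigr => i _.
rewrite (bigD1 (x i)) //= eqxx mulr1 big1 ?addr0 // => v ne.
by rewrite [x i == v]eq_sym (negPf ne) mulr0.
Qed.
Theorem theorem2 (R : realType) (eps : R) (l n k : nat) (m : 'I_l -> nat)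
  (x : 'I_n -> 'I_k) (nn : 'I_l -> nat) :
  0 < eps ->
  (forall j, (2 <= m j)%N) ->
  (forall j j', j != j' -> coprime (m j) (m j')) ->
  (forall j, (1 <= nn j)%N) ->
  (\sum_(j < l) nn j)%N = n ->
  \rank (Aw eps k m nn) = k ->
  cond_exp_fhat eps m x nn = fvec R x.
Proof.
move=> he hm _ hnn hsum hrank.
case: (posnP k) => [k0|kpos].
  by subst k; apply/matrixP => i; case: i.
have lpos : (0 < l)%N.
  case: (posnP l) => // l0; exfalso.
  have := rank_leq_row (Aw eps k m nn); rewrite hrank.
  rewrite big1; first by rewrite leqn0 => /eqP k0; move: kpos; rewrite k0.
  by move=> j _; have := ltn_ord j; rewrite {2}l0.
pose j0 := Ordinal lpos.
have npos : (0 < n)%N.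
  by apply: leq_trans (hnn j0) _; rewrite -hsum (bigD1 j0) //= leq_addr.
have n0 : n%:R != 0 :> R by rewrite pnatr_eq0 -lt0n.
set xx := fun i => nat_of_ord (x i).
set Ts := #|[set t : {ffun 'I_n -> 'I_l} | tc nn t]|.
set ll : R := (l%:R)^-1.
rewrite /cond_exp_fhat.
set Zs := \sum_(o | counts_eq nn o) _.
have Zs_e : Zs = Ts%:R * ll ^+ n := Zs_eq xx he hm nn.
have Ts0 : (0 < Ts)%N.
  have [t ht] := tc_exists j0 hsum.
  by apply/card_gt0P; exists t; rewrite inE.
have Zs0 : Zs != 0.
  rewrite Zs_e mulf_neq0 // ?pnatr_eq0 -?lt0n // expf_neq0 // invr_eq0 pnatr_eq0 -lt0n //.
set A := Aw eps k m nn.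
set W := Wsqrt eps m nn.
set f := fvec R x.
have cntE : forall o : {ffun 'I_n -> {j : 'I_l & {set 'I_(m j)}}}, counts_eq nn o -> cnt o = nn.
  by move=> o /forallP ho; apply: funext => j; apply/eqP.
have step1 : \sum_(o | counts_eq nn o) prob eps xx o *: @fhat R eps l n k m o =
   invmx (A^T *m A) *m A^T *m (W *m \sum_(o | counts_eq nn o) prob eps xx o *: svec eps o).
  rewrite !mulmx_sumr; apply: eq_bigr => o ho.
  by rewrite /fhat (cntE o ho) -/A -/W !scalemxAr.
have step2 : W *m \sum_(o | counts_eq nn o) prob eps xx o *: svec eps o = Zs *: (A *m f).
  have e : \sum_(o : {ffun 'I_n -> {j : 'I_l & {set 'I_(m j)}}} | counts_eq nn o) prob eps xx o *: svec eps o =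
     \mxcol_j (\sum_(o : {ffun 'I_n -> {j : 'I_l & {set 'I_(m j)}}} | counts_eq nn o) prob eps xx o *: shat eps o j).
    apply/matrixP => a b; rewrite summxE mxE summxE.
    by apply: eq_bigr => o _; rewrite /svec !mxE.
  rewrite e /W /Wsqrt mul_mxdiag_mxcol /A /Aw /Amat -mulmxA mxcol_mul.
  rewrite mul_mxdiag_mxcol mxcolZ; apply: eq_mxcol => j.
  rewrite !mul_scalar_mx scalerA mulrC -scalerA.
  set sw := Num.sqrt _.
  case: (eqVneq sw 0) => [->|swn0]; first by rewrite !scale0r.
  congr (sw *: _).
  have pq : p_of eps (m j) - q_of eps (m j) != 0.
    apply/negP => /eqP epq; move: swn0; rewrite /sw /weight epq expr0n /= !mul0r sqrtr0.
    by rewrite eqxx.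
  apply/matrixP => a c; rewrite summxE !mxE.
  have nj0 : (nn j)%:R != 0 :> R by rewrite pnatr_eq0 -lt0n hnn.
  set p := p_of eps (m j); set q := q_of eps (m j).
  rewrite (eq_bigr (fun o => prob eps xx o * (((cnt_a o j a)%:R / (nn j)%:R - q) / (p - q)))); last first.
    by move=> o ho; rewrite !mxE (cntE o ho).
  transitivity ((\sum_(o : {ffun 'I_n -> {j : 'I_l & {set 'I_(m j)}}} | counts_eq nn o)
      prob eps xx o * (cnt_a o j a)%:R) * ((nn j)%:R^-1 / (p - q)) - Zs * (q / (p - q))).
    rewrite /Zs !mulr_suml -sumrB; apply: eq_bigr => o _.
    by field; rewrite pq.
  rewrite (Cs_eq xx he hm nn (ltn_ord a)).
  have cTe : forall i0 : 'I_n, (cT nn i0 j)%:R = Ts%:R * (nn j)%:R / n%:R :> R.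
    move=> i0; have := congr1 (fun z : nat => z%:R : R) (cT_sum nn i0 j).
    rewrite /= !natrM -/Ts => h.
    by apply: (mulfI n0); rewrite h mulrCA mulfV // mulr1.
  under eq_bigr do rewrite cTe.
  rewrite -mulr_suml -mulr_sumr big_split /= sumr_const card_ord -mulr_sumr.
  rewrite sum_ind.
  rewrite (eq_bigr (fun v : 'I_k => ((v %% m j)%N == a)%:R * #|[set i | x i == v]|%:R * n%:R^-1)); last first.
    by move=> v _; rewrite !mxE mulrA.
  rewrite [X in _ = Zs * X](_ : _ = (\sum_(v < k) ((v %% m j)%N == a)%:R * #|[set i | x i == v]|%:R) / n%:R); last first.
    by rewrite mulr_suml.
  rewrite count_mod Zs_e -/ll /xx -/p -/q.
  rewrite -mulr_natr.
  by field; rewrite pq nj0 n0.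
rewrite step1 step2 -scalemxAr scalerA mulVf // scale1r.
rewrite mulmxA -(mulmxA (invmx _)) mulVmx ?mul1mx //.
exact: AtA_unit.
Qed.
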